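(* Let $r>0$ be the maximum range, and let $d_s$ and $\theta_s$ be parameters with $0\le d_s\le 2r$ and $0^\circ\le\theta_s\le 60^\circ$. Let $Q_i,Q_j,Q_k\in\mathbb{R}^2$ be the locations of a triplet of reference nodes (with parameters $d_s,\theta_s$), forming the triangle $q=\triangle Q_iQ_jQ_k$. Let $U\in\mathbb{R}^2$, $U\notin\{Q_i,Q_j,Q_k\}$, be the position of a user terminal that has LoS conditions to all three nodes, in particular $\|UQ_i\|,\|UQ_j\|,\|UQ_k\|\le r$. Let $\theta_E$ be the effective visibility angle of $U$. Then $$|90^\circ-\theta_E|\le 90^\circ-\theta_s\quad\text{if } U \text{ lies inside } q,$$ and $$|90^\circ-\theta_E|\le 90^\circ-2\arctan\!\Big(\frac{d_s}{2r}\tan\big(\tfrac{\theta_s}{2}\big)\Big)\quad\text{if } U \text{ lies outside } q.$$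
   Context: A triplet of reference nodes with minimum separation distance $d_s$ and minimum separation angle $\theta_s$ is a set of three points $Q_i,Q_j,Q_k$ that are the vertices of a triangle $q$ such that all three side lengths of $q$ are at least $d_s$ and all three interior angles $\hat Q_i,\hat Q_j,\hat Q_k$ of $q$ are at least $\theta_s$. For a point $U$, the (non-reflex) visibility angles are $\theta_{ij}=\angle Q_iUQ_j$, $\theta_{ik}=\angle Q_iUQ_k$, $\theta_{jk}=\angle Q_jUQ_k$, each taken in $[0^\circ,180^\circ]$. The effective visibility angle (EVA) $\theta_E$ of $U$ is the one among $\theta_{ij},\theta_{ik},\theta_{jk}$ that is closest to $90^\circ$, i.e. minimizes $|90^\circ-\theta|$. *)

(* Defs.v *)
(* concrete reals R, angles in radians (90 deg = PI/2). *)
From Stdlib Require Import Reals Lra.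
Open Scope R_scope.

Definition pt := (R * R)%type.

Definition dot (a b : pt) : R := fst a * fst b + snd a * snd b.
Definition sub (a b : pt) : pt := (fst a - fst b, snd a - snd b).
Definition norm (a : pt) : R := sqrt (dot a a).
Definition edist (A B : pt) : R := norm (sub B A).

(* Non-reflex angle  /_ A O B  in [0, PI] (for A <> O, B <> O). *)
Definition angle (A O B : pt) : R :=
  acos (dot (sub A O) (sub B O) / (norm (sub A O) * norm (sub B O))).

Definition noncollinear (A B C : pt) : Prop :=
  (fst B - fst A) * (snd C - snd A) - (snd B - snd A) * (fst C - fst A) <> 0.

(* Triplet of reference nodes with min separation distance ds and
   min separation angle ths. *)
Definition triplet (ds ths : R) (Qi Qj Qk : pt) : Prop :=
  noncollinear Qi Qj Qk /\
  edist Qi Qj >= ds /\ edist Qi Qk >= ds /\ edist Qj Qk >= ds /\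
  angle Qj Qi Qk >= ths /\ angle Qi Qj Qk >= ths /\ angle Qi Qk Qj >= ths.

Definition in_triangle (U Qi Qj Qk : pt) : Prop :=
  exists a b c : R, 0 <= a /\ 0 <= b /\ 0 <= c /\ a + b + c = 1 /\
    fst U = a * fst Qi + b * fst Qj + c * fst Qk /\
    snd U = a * snd Qi + b * snd Qj + c * snd Qk.

Definition is_EVA (U Qi Qj Qk : pt) (thE : R) : Prop :=
  let tij := angle Qi U Qj in
  let tik := angle Qi U Qk in
  let tjk := angle Qj U Qk in
  (thE = tij \/ thE = tik \/ thE = tjk) /\
  Rabs (PI/2 - thE) <= Rabs (PI/2 - tij) /\
  Rabs (PI/2 - thE) <= Rabs (PI/2 - tik) /\
  Rabs (PI/2 - thE) <= Rabs (PI/2 - tjk).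

(* Main.v *)
Require Import Defs.
From Stdlib Require Import Reals Lra Psatz.
Open Scope R_scope.

Definition cross (a b : pt) : R := fst a * snd b - snd a * fst b.
Definition opp (a : pt) : pt := (- fst a, - snd a).
Definition cosv (x y : pt) : R := dot x y / (norm x * norm y).

Lemma dot_self_nonneg v : 0 <= dot v v.
Proof. unfold dot; nra. Qed.

Lemma norm_nonneg v : 0 <= norm v.
Proof. unfold norm; apply sqrt_pos. Qed.

Lemma norm_sq v : norm v * norm v = dot v v.
Proof. unfold norm; apply sqrt_sqrt, dot_self_nonneg. Qed.

Lemma lagrange a b : dot a a * dot b b = dot a b * dot a b + cross a b * cross a b.
Proof. unfold dot, cross; ring. Qed.

Lemma cs_upper a b : dot a b <= norm a * norm b.
Proof.
  pose proof (lagrange a b). pose proof (norm_sq a). pose proof (norm_sq b).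
  pose proof (norm_nonneg a). pose proof (norm_nonneg b).
  assert (0 <= norm a * norm b) by nra.
  assert (dot a b * dot a b <= (norm a * norm b) * (norm a * norm b)) by nra.
  nra.
Qed.

Lemma cs_lower a b : - (norm a * norm b) <= dot a b.
Proof.
  pose proof (lagrange a b). pose proof (norm_sq a). pose proof (norm_sq b).
  pose proof (norm_nonneg a). pose proof (norm_nonneg b).
  assert (0 <= norm a * norm b) by nra.
  assert (dot a b * dot a b <= (norm a * norm b) * (norm a * norm b)) by nra.
  nra.
Qed.

Lemma norm_pos v : v <> (0,0) -> 0 < norm v.
Proof.
  intro H. destruct v as [x y].
  pose proof (norm_nonneg (x,y)). pose proof (norm_sq (x,y)).
  destruct (Req_dec (norm (x,y)) 0) as [E|E]; [|lra].
  exfalso. rewrite E in H1. unfold dot in H1; simpl in H1.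
  apply H. assert (x = 0) by nra. assert (y = 0) by nra. subst; reflexivity.
Qed.

Lemma sub_ne A B : A <> B -> sub A B <> (0,0).
Proof.
  destruct A as [a1 a2], B as [b1 b2]; unfold sub; simpl; intros H E.
  injection E; intros; apply H; f_equal; lra.
Qed.

Lemma norm_opp v : norm (opp v) = norm v.
Proof. unfold norm, opp, dot; simpl; f_equal; ring. Qed.

Lemma norm_sub_sym a b : norm (sub a b) = norm (sub b a).
Proof. unfold norm, sub, dot; simpl; f_equal; ring. Qed.

Lemma cosv_sym a b : cosv a b = cosv b a.
Proof. unfold cosv, dot; f_equal; ring. Qed.

Lemma cosv_bounds a b : a <> (0,0) -> b <> (0,0) -> -1 <= cosv a b <= 1.
Proof.
  intros Ha Hb. pose proof (norm_pos _ Ha). pose proof (norm_pos _ Hb).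
  pose proof (cs_upper a b). pose proof (cs_lower a b).
  unfold cosv. assert (0 < norm a * norm b) by nra.
  split.
  - apply (Rmult_le_reg_r (norm a * norm b)); auto.
    unfold Rdiv; rewrite Rmult_assoc, Rinv_l; lra.
  - apply (Rmult_le_reg_r (norm a * norm b)); auto.
    unfold Rdiv; rewrite Rmult_assoc, Rinv_l; lra.
Qed.

Lemma cosv_gt a b K : 0 < norm a -> 0 < norm b -> dot a b > K * norm a * norm b -> cosv a b > K.
Proof.
  intros. unfold cosv. assert (0 < norm a * norm b) by nra.
  apply (Rmult_lt_reg_r (norm a * norm b)); auto.
  unfold Rdiv; rewrite Rmult_assoc, Rinv_l; lra.
Qed.

Lemma cosv_le_dot a b K : 0 < norm a -> 0 < norm b -> cosv a b <= K -> dot a b <= K * norm a * norm b.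
Proof.
  intros. unfold cosv in H1. assert (0 < norm a * norm b) by nra.
  apply (Rmult_le_compat_r (norm a * norm b)) in H1; [|lra].
  unfold Rdiv in H1; rewrite Rmult_assoc, Rinv_l in H1; lra.
Qed.

Lemma cosv_ge_dot a b K : 0 < norm a -> 0 < norm b -> K <= cosv a b -> K * norm a * norm b <= dot a b.
Proof.
  intros. unfold cosv in H1. assert (0 < norm a * norm b) by nra.
  apply (Rmult_le_compat_r (norm a * norm b)) in H1; [|lra].
  unfold Rdiv in H1; rewrite Rmult_assoc, Rinv_l in H1; lra.
Qed.

Lemma norm_comb x e1 e3 l m : 0 <= l -> 0 <= m ->
  fst x = l * fst e1 + m * fst e3 -> snd x = l * snd e1 + m * snd e3 ->
  norm x <= l * norm e1 + m * norm e3.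
Proof.
  intros Hl Hm H1 H2.
  assert (Hd : dot x x = l*l*dot e1 e1 + m*m*dot e3 e3 + 2*l*m*dot e1 e3).
  { unfold dot; rewrite H1, H2; ring. }
  pose proof (cs_upper e1 e3). pose proof (norm_sq e1). pose proof (norm_sq e3).
  pose proof (norm_sq x). pose proof (norm_nonneg x). pose proof (norm_nonneg e1).
  pose proof (norm_nonneg e3).
  assert (0 <= l * norm e1 + m * norm e3) by nra.
  assert (norm x * norm x <= (l * norm e1 + m * norm e3) * (l * norm e1 + m * norm e3)).
  { rewrite H4, Hd. assert (0 <= l*m) by nra. nra. }
  nra.
Qed.

Lemma cone x e1 e3 f l m K : 0 <= l -> 0 <= m -> 0 <= K ->
  fst x = l * fst e1 + m * fst e3 -> snd x = l * snd e1 + m * snd e3 ->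
  dot e1 f >= K * norm e1 * norm f -> dot e3 f >= K * norm e3 * norm f ->
  ((0 < l /\ dot e1 f > K * norm e1 * norm f) \/ (0 < m /\ dot e3 f > K * norm e3 * norm f)) ->
  dot x f > K * norm x * norm f.
Proof.
  intros Hl Hm HK H1 H2 Hd1 Hd3 Hs.
  pose proof (norm_comb x e1 e3 l m Hl Hm H1 H2).
  assert (Hx : dot x f = l * dot e1 f + m * dot e3 f) by (unfold dot; rewrite H1, H2; ring).
  pose proof (norm_nonneg f).
  assert (K * norm x * norm f <= K * (l * norm e1 + m * norm e3) * norm f).
  { apply Rmult_le_compat_r; auto. apply Rmult_le_compat_l; auto. }
  assert (l * dot e1 f + m * dot e3 f > K * (l * norm e1 + m * norm e3) * norm f).
  { destruct Hs as [[Hl' Hs]|[Hm' Hs]]; nra. }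
  lra.
Qed.

Lemma dot_opp_l c f : dot (opp c) f = - dot c f.
Proof. unfold dot, opp; simpl; ring. Qed.
Lemma dot_comm a b : dot a b = dot b a.
Proof. unfold dot; ring. Qed.

Ltac cone_fin := first [lra | (unfold sub, opp; simpl; ring) | (left; split; lra) | (right; split; lra)].

Lemma far_case a b c K :
  0 < norm a -> 0 < norm b -> 0 < norm c -> 0 < norm (sub a c) -> 0 < norm (sub b c) ->
  0 <= K -> K <= 1 ->
  dot a b > K * norm a * norm b -> dot a c < - K * norm a * norm c ->
  dot b c < - K * norm b * norm c ->
  cosv (sub a c) (sub b c) > K.
Proof.
  intros Ha Hb Hc Hac Hbc HK0 HK1 Hab Hac' Hbc'.
  assert (E1 : dot (opp c) b = - dot b c) by (unfold dot, opp; simpl; ring).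
  assert (E2 : dot a (opp c) = - dot a c) by (unfold dot, opp; simpl; ring).
  assert (E3 : dot (opp c) (opp c) = norm c * norm c) by (rewrite norm_sq; unfold dot, opp; simpl; ring).
  pose proof (norm_opp c) as No.
  assert (E4 : norm c * norm c >= K * norm c * norm c) by nra.
  assert (Hal : dot (sub a c) b > K * norm (sub a c) * norm b).
  { apply (cone (sub a c) a (opp c) b 1 1 K); rewrite ?No, ?E1; cone_fin. }
  assert (Hbe : dot (sub a c) (opp c) > K * norm (sub a c) * norm (opp c)).
  { apply (cone (sub a c) a (opp c) (opp c) 1 1 K); rewrite ?No, ?E2, ?E3; cone_fin. }
  rewrite No in Hbe.
  apply cosv_gt; auto.
  rewrite dot_comm.
  replace (K * norm (sub a c) * norm (sub b c)) with (K * norm (sub b c) * norm (sub a c)) by ring.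
  assert (F1 : dot b (sub a c) > K * norm b * norm (sub a c)) by (rewrite dot_comm; lra).
  assert (F2 : dot (opp c) (sub a c) >= K * norm (opp c) * norm (sub a c)) by (rewrite dot_comm, No; lra).
  apply (cone (sub b c) b (opp c) (sub a c) 1 1 K); cone_fin.
Qed.

Lemma near_far a b c k :
  0 < norm a -> 0 < norm b -> 0 < norm c -> 1/2 <= k -> k <= 1 ->
  dot a b > k * norm a * norm b -> dot b c > k * norm b * norm c ->
  dot a c < - k * norm a * norm c -> False.
Proof.
  intros Ha Hb Hc Hk1 Hk2 H1 H2 H3.
  assert (Id : dot b b * dot a c = dot a b * dot c b + cross a b * cross c b)
    by (unfold dot, cross; ring).
  pose proof (lagrange a b) as La. pose proof (lagrange c b) as Lc.
  rewrite <- (norm_sq a), <- (norm_sq b) in La. rewrite <- (norm_sq c), <- (norm_sq b) in Lc.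
  rewrite <- (norm_sq b) in Id.
  rewrite (dot_comm c b) in Lc, Id.
  set (na := norm a) in *. set (nb := norm b) in *. set (nc := norm c) in *.
  set (X := cross a b) in *. set (Y := cross c b) in *.
  set (p := dot a b) in *. set (q := dot b c) in *. set (s := dot a c) in *.
  assert (0 <= k*na*nb) by (repeat apply Rmult_le_pos; lra).
  assert (0 <= k*nb*nc) by (repeat apply Rmult_le_pos; lra).
  assert (Hp : p * p > k*k*(na*nb)*(na*nb)) by nra.
  assert (Hq : q * q > k*k*(nb*nc)*(nb*nc)) by nra.
  assert (HX : X * X < (1 - k*k) * (na*nb) * (na*nb)) by nra.
  assert (HY : Y * Y < (1 - k*k) * (nb*nc) * (nb*nc)) by nra.
  set (P := (1 - k*k) * (na*nb) * (nb*nc)).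
  assert (HP : 0 <= P) by (unfold P; nra).
  assert (HXY2 : (X*Y) * (X*Y) < P * P).
  { unfold P. assert (0 <= X*X) by nra. assert (0 <= Y*Y) by nra. nra. }
  assert (HXY : X * Y > - P) by nra.
  assert (Hpq : p * q > k * k * (na*nb) * (nb*nc)).
  { assert (0 <= k*(na*nb)) by nra. assert (0 <= k*(nb*nc)) by nra. nra. }
  assert (nb*nb*s > (2*k*k - 1) * na * nb * nb * nc) by (unfold P in HXY; nra).
  assert ((2*k*k-1) * (na*nb*nb*nc) >= - k * (na*nb*nb*nc)).
  { assert (0 < na*nb*nb*nc) by (repeat apply Rmult_lt_0_compat; auto).
    assert (0 <= ((2*k-1)*(k+1)) * (na*nb*nb*nc)) by (apply Rmult_le_pos; nra). nra. }
  assert (nb*nb*s < - k * na * nb * nb * nc).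
  { assert (0 < nb*nb) by nra. nra. }
  nra.
Qed.

Lemma all_far a b c :
  0 < norm a -> 0 < norm b -> 0 < norm c ->
  dot a b < - (1/2) * norm a * norm b -> dot b c < - (1/2) * norm b * norm c ->
  dot a c < - (1/2) * norm a * norm c -> False.
Proof.
  intros Ha Hb Hc H1 H2 H3.
  set (w := (norm b * norm c * fst a + norm a * norm c * fst b + norm a * norm b * fst c,
             norm b * norm c * snd a + norm a * norm c * snd b + norm a * norm b * snd c)).
  pose proof (dot_self_nonneg w).
  assert (E : dot w w = (norm b * norm c)^2 * dot a a + (norm a * norm c)^2 * dot b b
      + (norm a * norm b)^2 * dot c c + 2 * (norm a * norm b * norm c) * (norm c * dot a b
      + norm a * dot b c + norm b * dot a c)) by (unfold w, dot; simpl; ring).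
  rewrite <- !norm_sq in E.
  assert (0 < norm a * norm b * norm c) by (repeat apply Rmult_lt_0_compat; auto).
  assert (norm c * dot a b + norm a * dot b c + norm b * dot a c < - (3/2) * (norm a * norm b * norm c)).
  { assert (norm c * dot a b < norm c * (- (1/2) * norm a * norm b)) by (apply Rmult_lt_compat_l; auto).
    assert (norm a * dot b c < norm a * (- (1/2) * norm b * norm c)) by (apply Rmult_lt_compat_l; auto).
    assert (norm b * dot a c < norm b * (- (1/2) * norm a * norm c)) by (apply Rmult_lt_compat_l; auto).
    nra. }
  nra.
Qed.

(* law of sines contradiction, scalar form *)
Lemma ls_scalar p q l D r k K c :
  0 < p -> 0 < q -> 0 < l -> p <= q -> q <= r -> 2 * k * r <= l -> 0 <= k ->
  l * l = p*p + q*q - 2*D -> p*p - D >= - K * p * l -> D > c * p * q ->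
  0 <= c -> 0 <= K -> K <= 1 -> 1 - 2*k*k <= c -> 1 - c*c <= 4*k*k*(1 - K*K) -> False.
Proof.
  intros Hp Hq Hl Hpq Hqr Hlr Hk El HB HD Hc HK0 HK1 N1 N2.
  assert (Hlq : 2*k*q <= l) by nra.
  assert (0 <= 2*k*q) by nra.
  assert (Hl2 : 4*k*k*q*q <= l*l) by nra.
  destruct (Rlt_or_le D (p*p)) as [Hi|Hi].
  - assert (Id : 2*q*(p*q - D) - l*l*p = (q-p)*(p*q+p*p-2*D)) by (rewrite El; ring).
    assert (0 <= (q-p)*(p*q+p*p-2*D)) by (apply Rmult_le_pos; nra).
    assert (4*k*k*q*q*p <= 2*q*(p*q-D)) by nra.
    assert (2*k*k*p*q <= p*q - D) by nra.
    assert (0 <= (c - (1 - 2*k*k)) * (p*q)) by (apply Rmult_le_pos; nra).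
    assert (D <= c*p*q) by nra.
    lra.
  - assert (H0 : 0 <= D - p*p <= K*p*l) by lra.
    assert ((D - p*p)*(D-p*p) <= K*K*p*p*l*l) by nra.
    assert (Id : p*p*q*q - D*D = p*p*(l*l) - (p*p-D)*(p*p-D)) by (rewrite El; ring).
    assert (p*p*q*q - D*D >= (1-K*K)*p*p*l*l) by nra.
    assert (p*p*q*q - D*D >= (1-K*K)*p*p*(4*k*k*q*q)).
    { assert (0 <= 1-K*K) by nra.
      assert (0 <= (1-K*K)*p*p) by (repeat apply Rmult_le_pos; lra).
      assert (0 <= ((1-K*K)*p*p)*(l*l - 4*k*k*q*q)) by (apply Rmult_le_pos; nra). nra. }
    assert (D*D > c*c*(p*q)*(p*q)).
    { assert (0 <= c*p*q) by (apply Rmult_le_pos; nra). nra. }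
    assert (0 < p*q*(p*q)) by nra.
    nra.
Qed.

Lemma norm_sub_zero x y : fst x = fst y -> snd x = snd y -> norm (sub x y) = 0.
Proof.
  intros H1 H2. unfold norm, dot, sub; simpl. rewrite H1, H2.
  replace (fst y - fst y) with 0 by ring. replace (snd y - snd y) with 0 by ring.
  replace (0*0+0*0) with 0 by ring. apply sqrt_0.
Qed.

Lemma self_ge v K : K <= 1 -> dot v v >= K * norm v * norm v.
Proof. intros. rewrite <- norm_sq. pose proof (norm_nonneg v).
  assert (0 <= (1-K)*(norm v*norm v)) by (apply Rmult_le_pos; nra). nra. Qed.

Lemma self_gt v K : K < 1 -> 0 < norm v -> dot v v > K * norm v * norm v.
Proof. intros. rewrite <- norm_sq.
  assert (0 < (1-K)*(norm v*norm v)) by (apply Rmult_lt_0_compat; nra). nra. Qed.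

Ltac cfin := first [lra | (unfold sub, opp; simpl; ring) | (apply self_ge; lra)
  | (left; split; [lra | first [lra | (apply self_gt; lra)]])
  | (right; split; [lra | first [lra | (apply self_gt; lra)]])].

Lemma AS b c K : 0 < norm b -> 0 < norm c -> 0 < norm (sub b c) -> 0 <= K -> K <= 1 ->
  dot (opp c) (sub b c) <= K * norm c * norm (sub b c) ->
  dot (opp b) (sub c b) >= - K * norm b * norm (sub c b).
Proof.
  intros Hb Hc Hbc HK0 HK1 H.
  apply Rnot_lt_ge; intro Hn.
  rewrite (norm_sub_sym c b) in Hn.
  assert (E : dot (opp b) (sub b c) = - dot (opp b) (sub c b)) by (unfold dot, opp, sub; simpl; ring).
  pose proof (norm_opp b) as Nb.
  assert (dot (opp c) (sub b c) > K * norm (opp c) * norm (sub b c)).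
  { apply (cone (opp c) (opp b) (sub b c) (sub b c) 1 1 K); rewrite ?Nb; cfin. }
  rewrite norm_opp in H0. lra.
Qed.

Lemma stepA a b c l m K : 0 < norm b -> 0 < norm (sub a b) -> 0 < norm (sub c b) ->
  0 <= K -> K < 1 -> 0 <= l -> 0 <= m -> 1 <= l + m ->
  fst a = l * fst b + m * fst c -> snd a = l * snd b + m * snd c ->
  dot (sub a b) (sub c b) <= K * norm (sub a b) * norm (sub c b) ->
  dot (opp b) (sub c b) >= - K * norm b * norm (sub c b).
Proof.
  intros Hb Hab Hcb HK0 HK1 Hl Hm Hlm H1 H2 HB.
  apply Rnot_lt_ge; intro Hn.
  assert (E : dot b (sub c b) = - dot (opp b) (sub c b)) by (unfold dot, opp, sub; simpl; ring).
  destruct (Rlt_or_le 0 (l + m - 1)) as [Hs|Hs].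
  - assert (dot (sub a b) (sub c b) > K * norm (sub a b) * norm (sub c b)).
    { apply (cone (sub a b) b (sub c b) (sub c b) (l+m-1) m K); try (unfold sub, opp; simpl; rewrite ?H1, ?H2; ring); cfin. }
    lra.
  - destruct (Rlt_or_le 0 m) as [Hm'|Hm'].
    + assert (dot (sub a b) (sub c b) > K * norm (sub a b) * norm (sub c b)).
      { apply (cone (sub a b) b (sub c b) (sub c b) (l+m-1) m K); try (unfold sub, opp; simpl; rewrite ?H1, ?H2; ring); cfin. }
      lra.
    + assert (m = 0) by lra. assert (l = 1) by lra. subst.
      rewrite norm_sub_zero in Hab; [lra| rewrite H1; ring | rewrite H2; ring].
Qed.

Lemma stepB a b c l m K : 0 < norm c -> 0 < norm (sub a c) -> 0 < norm (sub b c) ->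
  0 <= K -> K < 1 -> 0 <= l -> 0 <= m -> l + m <= 1 ->
  fst a = l * fst b + m * fst c -> snd a = l * snd b + m * snd c ->
  dot (sub a c) (sub b c) <= K * norm (sub a c) * norm (sub b c) ->
  dot (opp c) (sub b c) <= K * norm c * norm (sub b c).
Proof.
  intros Hc Hac Hbc HK0 HK1 Hl Hm Hlm H1 H2 HC.
  apply Rnot_lt_le; intro Hn.
  rewrite <- (norm_opp c) in Hn.
  destruct (Rlt_or_le 0 (1 - l - m)) as [Hs|Hs].
  - assert (dot (sub a c) (sub b c) > K * norm (sub a c) * norm (sub b c)).
    { apply (cone (sub a c) (opp c) (sub b c) (sub b c) (1-l-m) l K); try (unfold sub, opp; simpl; rewrite ?H1, ?H2; ring); cfin. }
    lra.
  - destruct (Rlt_or_le 0 l) as [Hl'|Hl'].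
    + assert (dot (sub a c) (sub b c) > K * norm (sub a c) * norm (sub b c)).
      { apply (cone (sub a c) (opp c) (sub b c) (sub b c) (1-l-m) l K); try (unfold sub, opp; simpl; rewrite ?H1, ?H2; ring); cfin. }
      lra.
    + assert (l = 0) by lra. assert (m = 1) by lra. subst.
      rewrite norm_sub_zero in Hac; [lra| rewrite H1; ring | rewrite H2; ring].
Qed.

Lemma goal1 a b c l m K : 0 < norm b -> 0 < norm c -> 0 < norm (sub a b) -> 0 < norm (sub a c) ->
  0 < norm (sub b c) ->
  0 <= K -> K < 1 -> 0 <= l -> 0 <= m ->
  fst a = l * fst b + m * fst c -> snd a = l * snd b + m * snd c ->
  dot (sub a b) (sub c b) <= K * norm (sub a b) * norm (sub c b) ->
  dot (sub a c) (sub b c) <= K * norm (sub a c) * norm (sub b c) ->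
  dot (opp b) (sub c b) >= - K * norm b * norm (sub c b).
Proof.
  intros. assert (0 < norm (sub c b)) by (rewrite norm_sub_sym; auto).
  destruct (Rle_or_lt 1 (l+m)).
  - apply (stepA a b c l m K); auto; lra.
  - apply AS; auto; try lra. apply (stepB a b c l m K); auto; lra.
Qed.

Lemma mid_case a b c l m K k r ds cp :
  0 < norm b -> 0 < norm c -> 0 < norm (sub a b) -> 0 < norm (sub a c) ->
  0 < norm (sub b c) -> 0 <= l -> 0 <= m ->
  fst a = l * fst b + m * fst c -> snd a = l * snd b + m * snd c ->
  cosv (sub a b) (sub c b) <= K -> cosv (sub a c) (sub b c) <= K ->
  norm b <= r -> norm c <= r -> ds <= norm (sub c b) -> ds = 2 * k * r -> 0 <= k ->
  dot b c > cp * norm b * norm c ->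
  0 <= K -> K < 1 -> 0 <= cp -> 1 - 2*k*k <= cp -> 1 - cp*cp <= 4*k*k*(1 - K*K) -> False.
Proof.
  intros Hb Hc Hab Hac Hbc Hl Hm H1 H2 HB HC Hbr Hcr Hds Eds Hk HD HK0 HK1 Hcp N1 N2.
  assert (Hcb : 0 < norm (sub c b)) by (rewrite norm_sub_sym; auto).
  apply cosv_le_dot in HB; auto. apply cosv_le_dot in HC; auto.
  pose proof (goal1 a b c l m K Hb Hc Hab Hac Hbc HK0 HK1 Hl Hm H1 H2 HB HC) as G1.
  assert (G2 : dot (opp c) (sub b c) >= - K * norm c * norm (sub b c)).
  { apply (goal1 a c b m l K); auto; try lra; rewrite norm_sub_sym; auto. }
  assert (E1 : dot (opp b) (sub c b) = norm b * norm b - dot b c)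
    by (rewrite norm_sq; unfold dot, opp, sub; simpl; ring).
  assert (E2 : dot (opp c) (sub b c) = norm c * norm c - dot b c)
    by (rewrite norm_sq; unfold dot, opp, sub; simpl; ring).
  assert (El : norm (sub c b) * norm (sub c b) = norm b * norm b + norm c * norm c - 2 * dot b c)
    by (rewrite !norm_sq; unfold dot, sub; simpl; ring).
  rewrite (norm_sub_sym b c) in G2.
  destruct (Rle_or_lt (norm b) (norm c)).
  - apply (ls_scalar (norm b) (norm c) (norm (sub c b)) (dot b c) r k K cp); auto; try lra.
  - apply (ls_scalar (norm c) (norm b) (norm (sub c b)) (dot b c) r k K cp); auto; try lra.
Qed.

Lemma sign_select s1 s2 s3 :
  ~ (0 <= s1 /\ 0 <= s2 /\ 0 <= s3) -> ~ (s1 <= 0 /\ s2 <= 0 /\ s3 <= 0) ->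
  (s2 <> 0 /\ s3*s2 <= 0 /\ s1*s2 <= 0) \/ (s3 <> 0 /\ s2*s3 <= 0 /\ s1*s3 <= 0)
  \/ (s1 <> 0 /\ s2*s1 <= 0 /\ s3*s1 <= 0).
Proof.
  intros H1 H2.
  destruct (Rlt_or_le 0 s1); destruct (Rlt_or_le 0 s2); destruct (Rlt_or_le 0 s3);
  destruct (Rlt_or_le s1 0); destruct (Rlt_or_le s2 0); destruct (Rlt_or_le s3 0);
  first [ exfalso; apply H1; repeat split; lra | exfalso; apply H2; repeat split; lra
        | left; repeat split; [lra | nra | nra]
        | right; left; repeat split; [lra | nra | nra]
        | right; right; repeat split; [lra | nra | nra] ].
Qed.

Lemma mid_coeffs a b c :
  let s1 := cross a b in let s2 := cross b c in let s3 := cross c a in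
  s2 <> 0 -> s3*s2 <= 0 -> s1*s2 <= 0 ->
  exists l m, 0 <= l /\ 0 <= m /\ fst a = l * fst b + m * fst c /\ snd a = l * snd b + m * snd c.
Proof.
  intros s1 s2 s3 H0 H1 H2.
  exists (- s3 / s2), (- s1 / s2).
  assert (0 < s2 * s2) by (destruct (Rlt_or_le 0 s2); nra).
  assert (Ha : forall x, x * s2 <= 0 -> 0 <= - x / s2).
  { intros x Hx. replace (- x / s2) with (- (x * s2) / (s2 * s2)) by (field; auto).
    unfold Rdiv. apply Rmult_le_pos; [lra|]. left; apply Rinv_0_lt_compat; auto. }
  repeat split; auto; unfold s1, s2, s3, cross in *; field; auto.
Qed.

Lemma not_all_nonneg a b c :
  dot a b > 0 -> dot b c > 0 -> dot a c > 0 -> 0 < dot a a ->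
  cross a b + cross b c + cross c a <> 0 ->
  ~ (0 <= cross a b /\ 0 <= cross b c /\ 0 <= cross c a).
Proof.
  intros H1 H2 H3 H4 HN [A [B C]].
  assert (Id : cross b c * dot a a + cross c a * dot a b + cross a b * dot a c = 0)
    by (unfold cross, dot; ring).
  assert (cross b c * dot a a = 0) by nra.
  assert (cross b c = 0) by nra.
  assert (cross c a = 0) by nra.
  assert (cross a b = 0) by nra.
  lra.
Qed.

Lemma not_all_nonpos a b c :
  dot a b > 0 -> dot b c > 0 -> dot a c > 0 -> 0 < dot a a ->
  cross a b + cross b c + cross c a <> 0 ->
  ~ (cross a b <= 0 /\ cross b c <= 0 /\ cross c a <= 0).
Proof.
  intros H1 H2 H3 H4 HN [A [B C]].
  assert (Id : cross b c * dot a a + cross c a * dot a b + cross a b * dot a c = 0)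
    by (unfold cross, dot; ring).
  assert (cross b c * dot a a = 0) by nra.
  assert (cross b c = 0) by nra.
  assert (cross c a = 0) by nra.
  assert (cross a b = 0) by nra.
  lra.
Qed.

Lemma case_all_near a b c K k r ds cp :
  0 < norm a -> 0 < norm b -> 0 < norm c ->
  0 < norm (sub a b) -> 0 < norm (sub a c) -> 0 < norm (sub b c) ->
  cross a b + cross b c + cross c a <> 0 ->
  cosv (sub b a) (sub c a) <= K -> cosv (sub a b) (sub c b) <= K -> cosv (sub a c) (sub b c) <= K ->
  norm a <= r -> norm b <= r -> norm c <= r ->
  ds <= norm (sub b a) -> ds <= norm (sub c a) -> ds <= norm (sub c b) ->
  ds = 2 * k * r -> 0 <= k ->
  dot a b > cp * norm a * norm b -> dot b c > cp * norm b * norm c -> dot a c > cp * norm a * norm c ->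
  0 <= K -> K < 1 -> 0 <= cp -> 1 - 2*k*k <= cp -> 1 - cp*cp <= 4*k*k*(1 - K*K) -> False.
Proof.
  intros Ha Hb Hc Hab Hac Hbc HN HA HB HC Har Hbr Hcr D1 D2 D3 Eds Hk H1 H2 H3 HK0 HK1 Hcp N1 N2.
  assert (Hba : 0 < norm (sub b a)) by (rewrite norm_sub_sym; auto).
  assert (Hca : 0 < norm (sub c a)) by (rewrite norm_sub_sym; auto).
  assert (Hcb : 0 < norm (sub c b)) by (rewrite norm_sub_sym; auto).
  assert (P1 : dot a b > 0) by (assert (0 <= cp*norm a*norm b) by (repeat apply Rmult_le_pos; lra); lra).
  assert (P2 : dot b c > 0) by (assert (0 <= cp*norm b*norm c) by (repeat apply Rmult_le_pos; lra); lra).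
  assert (P3 : dot a c > 0) by (assert (0 <= cp*norm a*norm c) by (repeat apply Rmult_le_pos; lra); lra).
  assert (Paa : 0 < dot a a) by (rewrite <- norm_sq; nra).
  destruct (sign_select _ _ _ (not_all_nonneg a b c P1 P2 P3 Paa HN) (not_all_nonpos a b c P1 P2 P3 Paa HN))
    as [[S1 [S2 S3]] | [[S1 [S2 S3]] | [S1 [S2 S3]]]].
  - destruct (mid_coeffs a b c S1 S2 S3) as [l [m [Hl [Hm [E1 E2]]]]].
    apply (mid_case a b c l m K k r ds cp); auto.
  -
    assert (T1 : cross a c <> 0) by (unfold cross in *; lra).
    assert (T2 : cross b a * cross a c <= 0) by (unfold cross in *; nra).
    assert (T3 : cross c b * cross a c <= 0) by (unfold cross in *; nra).
    destruct (mid_coeffs b a c T1 T3 T2) as [l [m [Hl [Hm [E1 E2]]]]].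
    apply (mid_case b a c l m K k r ds cp); auto; try (rewrite cosv_sym; auto).
  -
    assert (T1 : cross a b <> 0) by (unfold cross in *; lra).
    assert (T2 : cross c a * cross a b <= 0) by (unfold cross in *; nra).
    assert (T3 : cross b c * cross a b <= 0) by (unfold cross in *; nra).
    destruct (mid_coeffs c a b T1 T3 T2) as [l [m [Hl [Hm [E1 E2]]]]].
    apply (mid_case c a b l m K k r ds cp); auto; try (rewrite cosv_sym; auto).
Qed.

Lemma inside_scalar P Q DU DA N al :
  0 < P -> 0 < Q -> P*P = DU*DU + (al*N)*(al*N) -> Q*Q = DA*DA + N*N -> N <> 0 ->
  DU <= al * DA -> 0 <= al -> DU * Q <= DA * P.
Proof.
  intros HP HQ EP EQ HN H Hal.
  assert (HN2 : 0 < N*N) by (destruct (Rlt_or_le 0 N); nra).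
  destruct (Req_dec al 0) as [E|E].
  - subst al. assert (DU <= 0) by lra.
    assert (P = - DU) by nra.
    assert (- Q <= DA) by nra.
    nra.
  - assert (Hal' : 0 < al) by lra.
    destruct (Rlt_or_le 0 DU) as [H1|H1].
    + assert (0 < DA) by nra.
      assert (DU*DU <= al*DA*(al*DA)) by nra.
      assert ((DU*Q)*(DU*Q) <= (DA*P)*(DA*P)).
      { assert (Ex : (DA*P)*(DA*P) - (DU*Q)*(DU*Q) = N*N*(al*DA*(al*DA) - DU*DU)).
        { replace ((DA*P)*(DA*P)) with (DA*DA*(P*P)) by ring.
          replace ((DU*Q)*(DU*Q)) with (DU*DU*(Q*Q)) by ring. rewrite EP, EQ; ring. }
        nra. }
      assert (0 < DA*P) by nra.
      destruct (Rle_or_lt (DU*Q) (DA*P)); auto.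
      assert ((DA*P)*(DA*P) < (DU*Q)*(DU*Q)) by (apply Rmult_le_0_lt_compat; lra). lra.
    + destruct (Rle_or_lt 0 DA) as [H2|H2].
      * assert (DU*Q <= 0) by nra. assert (0 <= DA*P) by nra. lra.
      * assert (0 < -(al*DA)) by nra.
        assert ((-(al*DA))*(-(al*DA)) <= (-DU)*(-DU)) by (apply Rmult_le_compat; lra).
        assert (al*DA*(al*DA) <= DU*DU) by nra.
        assert ((DA*P)*(DA*P) <= (DU*Q)*(DU*Q)).
        { assert (Ex : (DA*P)*(DA*P) - (DU*Q)*(DU*Q) = N*N*(al*DA*(al*DA) - DU*DU)).
          { replace ((DA*P)*(DA*P)) with (DA*DA*(P*P)) by ring.
            replace ((DU*Q)*(DU*Q)) with (DU*DU*(Q*Q)) by ring. rewrite EP, EQ; ring. }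
          nra. }
        assert (DA*P < 0) by nra.
        destruct (Rle_or_lt (DU*Q) (DA*P)); auto.
        assert (DU*Q <= 0) by nra.
        assert ((-(DU*Q))*(-(DU*Q)) < (-(DA*P))*(-(DA*P))) by (apply Rmult_le_0_lt_compat; lra).
        lra.
Qed.

Lemma inside_angle A B C U al be ga :
  0 <= al -> 0 <= be -> 0 <= ga -> al + be + ga = 1 ->
  fst U = al * fst A + be * fst B + ga * fst C ->
  snd U = al * snd A + be * snd B + ga * snd C ->
  cross (sub B A) (sub C A) <> 0 -> U <> B -> U <> C ->
  cosv (sub B U) (sub C U) <= cosv (sub B A) (sub C A).
Proof.
  intros Ha Hb Hg Hs E1 E2 HN HUB HUC.
  assert (Hal : al = 1 - be - ga) by lra.
  set (e := sub B U). set (f := sub C U). set (g := sub B A). set (h := sub C A).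
  assert (He : 0 < norm e) by (apply norm_pos, sub_ne; auto).
  assert (Hf : 0 < norm f) by (apply norm_pos, sub_ne; auto).
  assert (HBA : B <> A) by (intro Eq; apply HN; unfold g, cross, sub; rewrite Eq; simpl; ring).
  assert (HCA : C <> A) by (intro Eq; apply HN; unfold h, cross, sub; rewrite Eq; simpl; ring).
  assert (Hg' : 0 < norm g) by (apply norm_pos, sub_ne; auto).
  assert (Hh : 0 < norm h) by (apply norm_pos, sub_ne; auto).
  assert (EX : cross e f = al * cross g h).
  { unfold e, f, g, h, cross, sub; simpl; rewrite E1, E2, Hal; ring. }
  set (V := al * dot (sub A U) (sub A U) + be * dot (sub B U) (sub B U) + ga * dot (sub C U) (sub C U)).
  assert (EV : dot e f = al * dot g h - V).
  { unfold V, e, f, g, h, dot, sub; simpl; rewrite E1, E2, Hal; ring. }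
  assert (HV : 0 <= V).
  { unfold V. pose proof (dot_self_nonneg (sub A U)). pose proof (dot_self_nonneg (sub B U)).
    pose proof (dot_self_nonneg (sub C U)). nra. }
  pose proof (lagrange e f) as L1. pose proof (lagrange g h) as L2.
  rewrite <- (norm_sq e), <- (norm_sq f) in L1. rewrite <- (norm_sq g), <- (norm_sq h) in L2.
  unfold cosv.
  assert (0 < norm e * norm f) by nra. assert (0 < norm g * norm h) by nra.
  assert (K : dot e f * (norm g * norm h) <= dot g h * (norm e * norm f)).
  { apply (inside_scalar (norm e * norm f) (norm g * norm h) (dot e f) (dot g h) (cross g h) al); auto.
    - rewrite <- EX. nra.
    - nra.
    - lra. }
  apply (Rmult_le_reg_r (norm e * norm f * (norm g * norm h))). nra.
  replace (dot e f / (norm e * norm f) * (norm e * norm f * (norm g * norm h))) with (dot e f * (norm g * norm h)) by (field; lra).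
  replace (dot g h / (norm g * norm h) * (norm e * norm f * (norm g * norm h))) with (dot g h * (norm e * norm f)) by (field; lra).
  lra.
Qed.

Lemma cos2_tan x : cos x <> 0 -> cos (2*x) * (1 + tan x * tan x) = 1 - tan x * tan x.
Proof.
  intros H. rewrite cos_2a. unfold tan. pose proof (sin2_cos2 x) as S. unfold Rsqr in S.
  field_simplify; auto. 
  replace (cos x ^ 4 - sin x ^ 4) with ((cos x ^ 2 - sin x ^ 2) * (sin x * sin x + cos x * cos x)) by ring.
  rewrite S. field; auto.
Qed.

Lemma numeric_facts r ds ths :
  0 < r -> 0 <= ds <= 2 * r -> 0 <= ths <= PI / 3 ->
  let K := cos ths in
  let k := ds / (2 * r) in
  let ph := 2 * atan (k * tan (ths / 2)) in
  let cp := cos ph in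
  1/2 <= K /\ K <= cp /\ cp <= 1 /\ 1 - 2*k*k <= cp /\ 1 - cp*cp <= 4*k*k*(1 - K*K)
  /\ 0 <= k /\ ds = 2 * k * r /\ 0 <= ph <= PI.
Proof.
  intros Hr Hds Hth K k ph cp.
  pose proof PI_RGT_0 as HPI.
  assert (HK : 1/2 <= K).
  { unfold K. rewrite <- cos_PI3. apply cos_decr_1; lra. }
  assert (Hk : 0 <= k <= 1).
  { unfold k. split.
    - apply Rmult_le_pos; [lra|]. left; apply Rinv_0_lt_compat; lra.
    - apply (Rmult_le_reg_r (2*r)); [lra|]. unfold Rdiv. rewrite Rmult_assoc, Rinv_l; lra. }
  assert (Hc2 : 0 < cos (ths/2)) by (apply cos_gt_0; lra).
  set (T := tan (ths/2)) in *.
  assert (HT : 0 <= T).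
  { unfold T, tan. apply Rmult_le_pos; [apply sin_ge_0; lra|]. left; apply Rinv_0_lt_compat; auto. }
  assert (EK : K * (1 + T*T) = 1 - T*T).
  { unfold K, T. replace ths with (2 * (ths/2)) at 1 by field. apply cos2_tan; lra. }
  set (t := k * T) in *.
  assert (Ht : 0 <= t) by (unfold t; nra).
  assert (Hat : 0 <= atan t < PI/2).
  { pose proof (atan_bound t). split; [|lra].
    destruct Ht as [Ht|Ht]. rewrite <- atan_0. left; apply atan_increasing; auto.
    rewrite <- Ht, atan_0; lra. }
  assert (Eph : cp * (1 + t*t) = 1 - t*t).
  { unfold cp, ph. pose proof (atan_bound t). assert (0 < cos (atan t)) by (apply cos_gt_0; lra).
    pose proof (cos2_tan (atan t)) as Z. rewrite tan_atan in Z. apply Z; lra. }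
  assert (ET : T*T <= 1/3).
  { assert (0 < 1 + T*T) by nra. nra. }
  assert (D1 : 0 < 1 + t*t) by nra. assert (D2 : 0 < 1 + T*T) by nra.
  assert (Ecp : cp = (1 - t*t)/(1+t*t)).
  { apply (Rmult_eq_reg_r (1+t*t)); [rewrite Eph; field|]; apply Rgt_not_eq; lra. }
  assert (EK' : K = (1 - T*T)/(1+T*T)).
  { apply (Rmult_eq_reg_r (1+T*T)); [rewrite EK; field|]; apply Rgt_not_eq; lra. }
  assert (0 <= T*T*(1-k*k)) by (apply Rmult_le_pos; nra).
  assert (Htt : t*t <= T*T) by (unfold t; nra).
  repeat split; auto; try lra.
  -
    rewrite Ecp, EK'. apply (Rmult_le_reg_r ((1+t*t)*(1+T*T))); [nra|].
    replace ((1 - T*T)/(1+T*T) * ((1+t*t)*(1+T*T))) with ((1 - T*T)*(1+t*t)) by (field; lra).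
    replace ((1 - t*t)/(1+t*t) * ((1+t*t)*(1+T*T))) with ((1 - t*t)*(1+T*T)) by (field; lra).
    nra.
  - rewrite Ecp. apply (Rmult_le_reg_r (1+t*t)); [nra|].
    replace ((1 - t*t)/(1+t*t) * (1+t*t)) with (1 - t*t) by (field; lra). nra.
  - rewrite Ecp. apply (Rmult_le_reg_r (1+t*t)); [nra|].
    replace ((1 - t*t)/(1+t*t) * (1+t*t)) with (1 - t*t) by (field; lra).
    unfold t. assert (0 <= k*k*(1 + k*k*T*T - T*T)) by (apply Rmult_le_pos; nra). nra.
  - rewrite Ecp, EK'.
    assert (E1 : 1 - (1 - t*t)/(1+t*t) * ((1 - t*t)/(1+t*t)) = 4*t*t/((1+t*t)*(1+t*t))) by (field; lra).
    assert (E2 : 1 - (1 - T*T)/(1+T*T) * ((1 - T*T)/(1+T*T)) = 4*T*T/((1+T*T)*(1+T*T))) by (field; lra).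
    rewrite E1, E2.
    apply (Rmult_le_reg_r ((1+t*t)*(1+t*t)*((1+T*T)*(1+T*T)))); [nra|].
    replace (4*t*t/((1+t*t)*(1+t*t)) * ((1+t*t)*(1+t*t)*((1+T*T)*(1+T*T)))) with (4*t*t*((1+T*T)*(1+T*T))) by (field; lra).
    replace (4*k*k*(4*T*T/((1+T*T)*(1+T*T))) * ((1+t*t)*(1+t*t)*((1+T*T)*(1+T*T)))) with (16*k*k*T*T*((1+t*t)*(1+t*t))) by (field; lra).
    unfold t.
    assert (0 <= 2*(1+k*k*T*T) - (1+T*T)) by nra.
    assert ((1+T*T)*(1+T*T) <= 4*((1+k*k*T*T)*(1+k*k*T*T))) by nra.
    assert (0 <= 4*k*k*T*T) by nra.
    assert (4*k*k*T*T*((1+T*T)*(1+T*T)) <= 4*k*k*T*T*(4*((1+k*k*T*T)*(1+k*k*T*T)))) by (apply Rmult_le_compat_l; lra).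
    replace (4*(k*T)*(k*T)*((1+T*T)*(1+T*T))) with (4*k*k*T*T*((1+T*T)*(1+T*T))) by ring.
    replace (16*k*k*T*T*((1+k*T*(k*T))*(1+k*T*(k*T)))) with (4*k*k*T*T*(4*((1+k*k*T*T)*(1+k*k*T*T)))) by ring.
    lra.
  - unfold k; field; lra.
  - unfold ph; lra.
  - unfold ph; lra.
Qed.

Lemma acos_cos_le x ths : -1 <= x <= 1 -> 0 <= ths <= PI -> acos x >= ths -> x <= cos ths.
Proof.
  intros Hx Ht H. rewrite <- (cos_acos x Hx) at 1. pose proof (acos_bound x).
  apply cos_decr_1; lra.
Qed.

Lemma final_bound c ph : -1 <= c <= 1 -> 0 <= ph <= PI -> - cos ph <= c <= cos ph ->
  Rabs (PI/2 - acos c) <= PI/2 - ph.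
Proof.
  intros Hc Hp [H1 H2]. pose proof (acos_bound c).
  assert (ph <= acos c).
  { apply (cos_decr_0 (acos c) ph); try lra. rewrite cos_acos; auto. }
  assert (acos c <= PI - ph).
  { apply (cos_decr_0 (PI - ph) (acos c)); try lra. rewrite cos_acos; auto.
    rewrite Rtrigo_facts.cos_pi_minus; lra. }
  apply Rabs_le; lra.
Qed.

Lemma sub_sub X Y U : sub (sub X U) (sub Y U) = sub X Y.
Proof. unfold sub; simpl; f_equal; ring. Qed.

Lemma cos_dot_gt x y c : 0 < norm x -> 0 < norm y -> cosv x y > c -> dot x y > c * norm x * norm y.
Proof.
  intros. unfold cosv in H1. assert (0 < norm x * norm y) by nra.
  apply (Rmult_lt_compat_r (norm x * norm y)) in H1; auto.
  unfold Rdiv in H1; rewrite Rmult_assoc, Rinv_l in H1; lra.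
Qed.

Lemma cos_dot_lt x y c : 0 < norm x -> 0 < norm y -> cosv x y < - c -> dot x y < - c * norm x * norm y.
Proof.
  intros. unfold cosv in H1. assert (0 < norm x * norm y) by nra.
  apply (Rmult_lt_compat_r (norm x * norm y)) in H1; auto.
  unfold Rdiv in H1; rewrite Rmult_assoc, Rinv_l in H1; lra.
Qed.

Lemma gtK x y K cp : 0 < norm x -> 0 < norm y -> 0 <= K <= cp -> dot x y > cp * norm x * norm y ->
  dot x y > K * norm x * norm y.
Proof. intros. assert (0 <= (cp - K) * (norm x * norm y)) by (apply Rmult_le_pos; nra). nra. Qed.

Lemma ltK x y K cp : 0 < norm x -> 0 < norm y -> 0 <= K <= cp -> dot x y < - cp * norm x * norm y ->
  dot x y < - K * norm x * norm y.
Proof. intros. assert (0 <= (cp - K) * (norm x * norm y)) by (apply Rmult_le_pos; nra). nra. Qed.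

Lemma ltK' x y K cp : 0 < norm x -> 0 < norm y -> 0 <= K <= cp -> dot y x < - cp * norm y * norm x ->
  dot x y < - K * norm x * norm y.
Proof. intros. rewrite dot_comm. assert (0 <= (cp - K) * (norm x * norm y)) by (apply Rmult_le_pos; nra). nra. Qed.

Ltac fk cp := first [apply (gtK _ _ _ cp); auto; lra | apply (ltK _ _ _ cp); auto; lra | apply (ltK' _ _ _ cp); auto; lra].

Lemma general_pair a b c K k r ds cp :
  0 < norm a -> 0 < norm b -> 0 < norm c ->
  0 < norm (sub a b) -> 0 < norm (sub a c) -> 0 < norm (sub b c) ->
  cross a b + cross b c + cross c a <> 0 ->
  cosv (sub b a) (sub c a) <= K -> cosv (sub a b) (sub c b) <= K -> cosv (sub a c) (sub b c) <= K ->
  norm a <= r -> norm b <= r -> norm c <= r ->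
  ds <= norm (sub b a) -> ds <= norm (sub c a) -> ds <= norm (sub c b) ->
  ds = 2 * k * r -> 0 <= k ->
  1/2 <= K -> K <= cp -> cp <= 1 -> 1 - 2*k*k <= cp -> 1 - cp*cp <= 4*k*k*(1 - K*K) ->
  Rabs (cosv a b) <= cp \/ Rabs (cosv a c) <= cp \/ Rabs (cosv b c) <= cp.
Proof.
  intros Ha Hb Hc Hab Hac Hbc HN HA HB HC Har Hbr Hcr D1 D2 D3 Eds Hk HK1 HK2 Hcp N1 N2.
  assert (Hba : 0 < norm (sub b a)) by (rewrite norm_sub_sym; auto).
  assert (Hca : 0 < norm (sub c a)) by (rewrite norm_sub_sym; auto).
  assert (Hcb : 0 < norm (sub c b)) by (rewrite norm_sub_sym; auto).
  destruct (Rle_or_lt (Rabs (cosv a b)) cp) as [X|X]; [left; auto|].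
  destruct (Rle_or_lt (Rabs (cosv a c)) cp) as [Y|Y]; [right; left; auto|].
  destruct (Rle_or_lt (Rabs (cosv b c)) cp) as [Z|Z]; [right; right; auto|].
  exfalso.
  assert (SX : cosv a b > cp \/ cosv a b < - cp) by (unfold Rabs in X; destruct (Rcase_abs (cosv a b)); lra).
  assert (SY : cosv a c > cp \/ cosv a c < - cp) by (unfold Rabs in Y; destruct (Rcase_abs (cosv a c)); lra).
  assert (SZ : cosv b c > cp \/ cosv b c < - cp) by (unfold Rabs in Z; destruct (Rcase_abs (cosv b c)); lra).
  assert (HK1' : K < 1).
  { destruct SX as [SX|SX]; [|pose proof (cosv_bounds a b)].
    - assert (cosv a b <= 1).
      { pose proof (cs_upper a b). unfold cosv. assert (0 < norm a * norm b) by nra.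
        apply (Rmult_le_reg_r (norm a * norm b)); auto. unfold Rdiv; rewrite Rmult_assoc, Rinv_l; lra. }
      lra.
    - assert (-1 <= cosv a b).
      { pose proof (cs_lower a b). unfold cosv. assert (0 < norm a * norm b) by nra.
        apply (Rmult_le_reg_r (norm a * norm b)); auto. unfold Rdiv; rewrite Rmult_assoc, Rinv_l; lra. }
      lra. }
  destruct SX as [SX|SX]; first [apply cos_dot_gt in SX; auto | apply cos_dot_lt in SX; auto];
  destruct SY as [SY|SY]; first [apply cos_dot_gt in SY; auto | apply cos_dot_lt in SY; auto];
  destruct SZ as [SZ|SZ]; first [apply cos_dot_gt in SZ; auto | apply cos_dot_lt in SZ; auto].
  -
    apply (case_all_near a b c K k r ds cp); auto; lra.
  -
    apply (near_far b a c cp); auto; try lra; rewrite dot_comm; lra.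
  -
    apply (near_far a b c cp); auto; lra.
  -
    assert (cosv (sub a c) (sub b c) > K).
    { apply far_case; auto; try lra.
      - fk cp.
      - fk cp.
      - fk cp. }
    lra.
  -
    apply (near_far a c b cp); auto; try lra; rewrite dot_comm; lra.
  -
    assert (cosv (sub a b) (sub c b) > K).
    { apply far_case; auto; try lra.
      - fk cp.
      - fk cp.
      - fk cp. }
    lra.
  -
    assert (cosv (sub b a) (sub c a) > K).
    { apply far_case; auto; try lra.
      - fk cp.
      - fk cp.
      - fk cp. }
    lra.
  -
    apply (all_far a b c); auto; apply (ltK _ _ _ cp); auto; lra.
Qed.

Lemma ang_cos X O Y ths : X <> O -> Y <> O -> 0 <= ths <= PI -> angle X O Y >= ths ->
  cosv (sub X O) (sub Y O) <= cos ths.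
Proof.
  intros H1 H2 H3 H4. apply acos_cos_le; auto.
  apply cosv_bounds; apply sub_ne; auto.
Qed.

Lemma noncol_ne A B C : noncollinear A B C -> A <> B /\ A <> C /\ B <> C.
Proof.
  unfold noncollinear; intros H; repeat split; intro E; apply H; subst; ring.
Qed.

Lemma abs_betw x y : Rabs x <= y -> - y <= x <= y.
Proof. unfold Rabs; destruct (Rcase_abs x); intros; lra. Qed.

Lemma pick_bound U Qi Qj Qk thE bnd :
  is_EVA U Qi Qj Qk thE ->
  (Rabs (PI/2 - angle Qi U Qj) <= bnd \/ Rabs (PI/2 - angle Qi U Qk) <= bnd \/
   Rabs (PI/2 - angle Qj U Qk) <= bnd) -> Rabs (PI/2 - thE) <= bnd.
Proof. intros [_ [E1 [E2 E3]]] [H|[H|H]]; lra. Qed.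

Theorem theorem1 (r ds ths : R) (Qi Qj Qk U : pt) (thE : R) :
  0 < r ->
  0 <= ds <= 2 * r ->
  0 <= ths <= PI / 3 ->
  triplet ds ths Qi Qj Qk ->
  U <> Qi -> U <> Qj -> U <> Qk ->
  edist U Qi <= r -> edist U Qj <= r -> edist U Qk <= r ->
  is_EVA U Qi Qj Qk thE ->
  (in_triangle U Qi Qj Qk -> Rabs (PI / 2 - thE) <= PI / 2 - ths) /\
  (~ in_triangle U Qi Qj Qk ->
     Rabs (PI / 2 - thE) <= PI / 2 - 2 * atan (ds / (2 * r) * tan (ths / 2))).
Proof.
  intros Hr Hds Hth Htr HUi HUj HUk Di Dj Dk EVA.
  pose proof PI_RGT_0 as HPI.
  destruct Htr as [HNC [Eij [Eik [Ejk [AngI [AngJ AngK]]]]]].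
  pose proof (numeric_facts r ds ths Hr Hds Hth) as NF. cbv zeta in NF.
  destruct NF as [HK [HKc [Hc1 [N1 [N2 [Hk [Eds Hph]]]]]]].
  destruct (noncol_ne _ _ _ HNC) as [Nij [Nik Njk]].
  assert (Th : 0 <= ths <= PI) by lra.
  pose proof (ang_cos _ _ _ _ (not_eq_sym Nij) (not_eq_sym Nik) Th AngI) as CI.
  pose proof (ang_cos _ _ _ _ Nij (not_eq_sym Njk) Th AngJ) as CJ.
  pose proof (ang_cos _ _ _ _ Nik Njk Th AngK) as CK.
  set (K := cos ths) in *.
  set (a := sub Qi U). set (b := sub Qj U). set (c := sub Qk U).
  assert (Ha : 0 < norm a) by (apply norm_pos, sub_ne; auto).
  assert (Hb : 0 < norm b) by (apply norm_pos, sub_ne; auto).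
  assert (Hc : 0 < norm c) by (apply norm_pos, sub_ne; auto).
  assert (Sba : sub b a = sub Qj Qi) by apply sub_sub.
  assert (Sca : sub c a = sub Qk Qi) by apply sub_sub.
  assert (Scb : sub c b = sub Qk Qj) by apply sub_sub.
  assert (Sab : sub a b = sub Qi Qj) by apply sub_sub.
  assert (Sac : sub a c = sub Qi Qk) by apply sub_sub.
  assert (Sbc : sub b c = sub Qj Qk) by apply sub_sub.
  assert (Hab : 0 < norm (sub a b)) by (rewrite Sab; apply norm_pos, sub_ne; auto).
  assert (Hac : 0 < norm (sub a c)) by (rewrite Sac; apply norm_pos, sub_ne; auto).
  assert (Hbc : 0 < norm (sub b c)) by (rewrite Sbc; apply norm_pos, sub_ne; auto).
  assert (HN : cross a b + cross b c + cross c a <> 0).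
  { intro E; apply HNC. unfold a, b, c, cross, sub in E; simpl in E. lra. }
  assert (Ar : norm a <= r) by exact Di.
  assert (Br : norm b <= r) by exact Dj.
  assert (Cr : norm c <= r) by exact Dk.
  split.
  -
    intros [al [be [ga [H1 [H2 [H3 [H4 [H5 H6]]]]]]]].
    assert (Pbc : cosv b c <= K).
    { eapply Rle_trans; [|exact CI].
      apply (inside_angle Qi Qj Qk U al be ga); auto. }
    assert (Pac : cosv a c <= K).
    { eapply Rle_trans; [|exact CJ].
      apply (inside_angle Qj Qi Qk U be al ga); auto; try lra.
      unfold noncollinear in HNC; unfold cross, sub; simpl; intro E; apply HNC; lra. }
    assert (Pab : cosv a b <= K).
    { eapply Rle_trans; [|exact CK].
      apply (inside_angle Qk Qi Qj U ga al be); auto; try lra.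
      unfold noncollinear in HNC; unfold cross, sub; simpl; intro E; apply HNC; lra. }
    apply (pick_bound U Qi Qj Qk thE _ EVA).
    change (angle Qi U Qj) with (acos (cosv a b)).
    change (angle Qi U Qk) with (acos (cosv a c)).
    change (angle Qj U Qk) with (acos (cosv b c)).
    pose proof (cosv_bounds a b) as Bab. pose proof (cosv_bounds a c) as Bac.
    pose proof (cosv_bounds b c) as Bbc.
    assert (Hnz : forall v, 0 < norm v -> v <> (0,0)).
    { intros v Hv E; rewrite E in Hv; unfold norm, dot in Hv; simpl in Hv.
      rewrite Rmult_0_l, Rplus_0_l, sqrt_0 in Hv; lra. }
    destruct (Rle_or_lt (- K) (cosv a b)) as [X|X].
    { left. apply final_bound; auto; lra. }
    destruct (Rle_or_lt (- K) (cosv a c)) as [Y|Y].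
    { right; left. apply final_bound; auto; lra. }
    destruct (Rle_or_lt (- K) (cosv b c)) as [Z|Z].
    { right; right. apply final_bound; auto; lra. }
    exfalso. apply (all_far a b c); auto.
    + apply cos_dot_lt; auto; lra.
    + apply cos_dot_lt; auto; lra.
    + apply cos_dot_lt; auto; lra.
  - (* outside: holds in general *)
    intros _.
    set (ph := 2 * atan (ds / (2 * r) * tan (ths / 2))) in *.
    set (k := ds / (2 * r)) in *.
    set (cp := cos ph) in *.
    assert (D1 : ds <= norm (sub b a)) by (rewrite Sba; apply Rge_le; exact Eij).
    assert (D2 : ds <= norm (sub c a)) by (rewrite Sca; apply Rge_le; exact Eik).
    assert (D3 : ds <= norm (sub c b)) by (rewrite Scb; apply Rge_le; exact Ejk).
    assert (HA : cosv (sub b a) (sub c a) <= K) by (rewrite Sba, Sca; exact CI).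
    assert (HB : cosv (sub a b) (sub c b) <= K) by (rewrite Sab, Scb; exact CJ).
    assert (HC : cosv (sub a c) (sub b c) <= K) by (rewrite Sac, Sbc; exact CK).
    pose proof (general_pair a b c K k r ds cp Ha Hb Hc Hab Hac Hbc HN HA HB HC Ar Br Cr D1 D2 D3
      Eds Hk HK HKc Hc1 N1 N2) as G.
    apply (pick_bound U Qi Qj Qk thE _ EVA).
    change (angle Qi U Qj) with (acos (cosv a b)).
    change (angle Qi U Qk) with (acos (cosv a c)).
    change (angle Qj U Qk) with (acos (cosv b c)).
    assert (Hnz : forall v, 0 < norm v -> v <> (0,0)).
    { intros v Hv E; rewrite E in Hv; unfold norm, dot in Hv; simpl in Hv.
      rewrite Rmult_0_l, Rplus_0_l, sqrt_0 in Hv; lra. }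
    destruct G as [G|[G|G]]; [left|right;left|right;right];
      (apply final_bound; [apply cosv_bounds; auto | lra |
        apply abs_betw; exact G]).
Qed.
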